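(* Let $L$ be a normal incline, $n\ge 3$, and let $A$ be an $n\times n$ completely positive matrix over $L$ such that every left almost principal $2\times 2$ submatrix of $A$ has positive determinant greater than or equal to its negative determinant. Then $A$ is UL-completely positive.
   Context: An incline is a nonempty set $L$ with binary operations $\oplus,\otimes$ such that $(L,\oplus)$ is a semilattice ($\oplus$ associative, commutative, idempotent), $(L,\otimes)$ is a semigroup, $x\otimes(y\oplus z)=(x\otimes y)\oplus(x\otimes z)$ and $x\oplus(x\otimes y)=x$ for all $x,y,z$. The order is $x\le y\iff x\oplus y=y$; $L$ is commutative if $\otimes$ is commutative. An r-ideal is a nonempty $J\subseteq L$ closed under $\oplus$ and under multiplication by arbitrary elements of $L$; a lattice ideal is a nonempty $J\subseteq L$ closed under $\oplus$ and downward closed. A commutative incline $L$ is normal if it has an additive identity $\mathbf{0}$ and a multiplicative identity $\mathbf{1}$ and: every singly generated r-ideal is a lattice ideal (LI-property); for each $x$ there is a unique $c$ with $c\otimes c=x$; $x\otimes y\le(x\otimes x)\oplus(y\otimes y)$ for all $x,y$. Matrix product: $(BC)_{ij}=\bigoplus_k b_{ik}\otimes c_{kj}$; $B^T$ is the transpose. $A$ is completely positive if $A=BB^T$ for some $n\times k$ matrix $B$ over $L$ all of whose entries are of the form $c\otimes c$. $A$ is UL-completely positive if $A=UU^T$ for some upper triangular $n\times n$ matrix $U$ over $L$. For index sets $\alpha=\{\alpha_1<\dots<\alpha_k\}$, $\beta=\{\beta_1<\dots<\beta_k\}$, $A[\alpha|\beta]$ is the submatrix with $(i,j)$ entry $a_{\alpha_i\beta_j}$;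 it is left almost principal if $\alpha_j=\beta_j$ for $2\le j\le k$ but $\alpha_1\ne\beta_1$. For a $2\times 2$ matrix $\begin{bmatrix}p&q\\ r&s\end{bmatrix}$, the positive determinant is $p\otimes s$ and the negative determinant is $q\otimes r$. *)

(* Defs.v *)
From mathcomp Require Import all_boot all_algebra.
Set Implicit Arguments. Unset Strict Implicit. Unset Printing Implicit Defensive.

Record cincline := CIncline {
  car :> Type;
  iadd : car -> car -> car;
  imul : car -> car -> car;
  izero : car;
  ione : car;
  iaddA : forall x y z, iadd x (iadd y z) = iadd (iadd x y) z;
  iaddC : forall x y, iadd x y = iadd y x;
  iaddI : forall x, iadd x x = x;
  imulA : forall x y z, imul x (imul y z) = imul (imul x y) z;
  imulC : forall x y, imul x y = imul y x;
  imulDr : forall x y z, imul x (iadd y z) = iadd (imul x y) (imul x z);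
  iabsorb : forall x y, iadd x (imul x y) = x;
  iadd0 : forall x, iadd izero x = x;
  imul1 : forall x, imul ione x = x
}.

Section Incline.
Variable L : cincline.

Definition ile (x y : L) : Prop := iadd x y = y.

Definition r_ideal (J : L -> Prop) : Prop :=
  (exists x, J x) /\ (forall x y, J x -> J y -> J (iadd x y)) /\
  (forall x y, J x -> J (imul x y) /\ J (imul y x)).

Definition lattice_ideal (J : L -> Prop) : Prop :=
  (exists x, J x) /\ (forall x y, J x -> J y -> J (iadd x y)) /\
  (forall x y, J y -> ile x y -> J x).

Definition gen_r_ideal (a : L) : L -> Prop :=
  fun x => forall J, r_ideal J -> J a -> J x.

Definition normal_incline : Prop :=
  (forall a, lattice_ideal (gen_r_ideal a)) /\
  (forall x : L, exists c : L, imul c c = x /\ forall c' : L, imul c' c' = x -> c' = c) /\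
  (forall x y, ile (imul x y) (iadd (imul x x) (imul y y))).

Definition imx_mul m k p (B : 'M[L]_(m, k)) (C : 'M[L]_(k, p)) : 'M[L]_(m, p) :=
  \matrix_(i, j) \big[@iadd L/@izero L]_(l < k) @imul L (B i l) (C l j).

Definition completely_positive n (A : 'M[L]_n) : Prop :=
  exists k (B : 'M[L]_(n, k)),
    (forall i j, exists c : L, B i j = imul c c) /\ A = imx_mul B B^T.

Definition UL_completely_positive n (A : 'M[L]_n) : Prop :=
  exists U : 'M[L]_n,
    (forall i j : 'I_n, (j < i)%N -> U i j = @izero L) /\ A = imx_mul U U^T.

(* Every left almost principal 2x2 submatrix A[{a1<c}|{b1<c}], a1 <> b1,
   i.e. [[A a1 b1, A a1 c],[A c b1, A c c]], has negative determinant
   (A a1 c * A c b1) <= positive determinant (A a1 b1 * A c c). *)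
Definition lap2_pos_ge_neg n (A : 'M[L]_n) : Prop :=
  forall a1 b1 c : 'I_n, (a1 < c)%N -> (b1 < c)%N -> a1 != b1 ->
    ile (imul (A a1 c) (A c b1)) (imul (A a1 b1) (A c c)).
End Incline.

(* Main.v *)
Require Import Defs.
From mathcomp Require Import all_boot all_algebra.
From Stdlib Require Import IndefiniteDescription.
Set Implicit Arguments. Unset Strict Implicit. Unset Printing Implicit Defensive.

Local Notation I1 := (@ione _).
Local Notation I0 := (@izero _).
Local Notation "x ⊕ y" := (iadd x y) (at level 50, left associativity).
Local Notation "x ⊗ y" := (imul x y) (at level 40, left associativity).

Lemma ile_refl (L : cincline) (x : L) : ile x x.
Proof. exact: iaddI. Qed.

Lemma ile_trans (L : cincline) (x y z : L) : ile x y -> ile y z -> ile x z.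
Proof. rewrite /ile => h1 h2; by rewrite -h2 iaddA h1. Qed.

Lemma ile_anti (L : cincline) (x y : L) : ile x y -> ile y x -> x = y.
Proof. rewrite /ile => h1 h2; by rewrite -h1 iaddC h2. Qed.

Lemma ile_addl (L : cincline) (x y : L) : ile x (x ⊕ y).
Proof. by rewrite /ile iaddA iaddI. Qed.

Lemma ile_addr (L : cincline) (x y : L) : ile y (x ⊕ y).
Proof. by rewrite iaddC; apply: ile_addl. Qed.

Lemma ile_lub (L : cincline) (x y z : L) : ile x z -> ile y z -> ile (x ⊕ y) z.
Proof. rewrite /ile => h1 h2; by rewrite -iaddA h2 h1. Qed.

Lemma ile_eq (L : cincline) (x y : L) : ile x y -> x ⊕ y = y.
Proof. by []. Qed.

Lemma mulDl (L : cincline) (x y z : L) : (y ⊕ z) ⊗ x = y ⊗ x ⊕ z ⊗ x.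
Proof. by rewrite imulC imulDr (imulC x y) (imulC x z). Qed.

Lemma mul1r (L : cincline) (x : L) : x ⊗ I1 = x.
Proof. by rewrite imulC imul1. Qed.

Lemma ile_mull (L : cincline) (x y : L) : ile (x ⊗ y) x.
Proof. by rewrite /ile iaddC iabsorb. Qed.

Lemma ile_mulr (L : cincline) (x y : L) : ile (x ⊗ y) y.
Proof. rewrite imulC; exact: ile_mull. Qed.

Lemma mul0 (L : cincline) (x : L) : I0 ⊗ x = I0.
Proof. by have := iabsorb I0 x; rewrite iadd0. Qed.

Lemma mulr0 (L : cincline) (x : L) : x ⊗ I0 = I0.
Proof. by rewrite imulC mul0. Qed.

Lemma ile0 (L : cincline) (x : L) : ile I0 x.
Proof. exact: iadd0. Qed.

Lemma ile_mul2l (L : cincline) (x y z : L) : ile x y -> ile (z ⊗ x) (z ⊗ y).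
Proof. rewrite /ile => h; by rewrite -imulDr h. Qed.

Lemma ile_mul2r (L : cincline) (x y z : L) : ile x y -> ile (x ⊗ z) (y ⊗ z).
Proof. rewrite (imulC x) (imulC y); exact: ile_mul2l. Qed.

Lemma ile_mul2 (L : cincline) (x y z w : L) : ile x y -> ile z w -> ile (x ⊗ z) (y ⊗ w).
Proof. move=> h1 h2; apply: ile_trans (ile_mul2r _ h1) (ile_mul2l _ h2). Qed.

Lemma mulACA (L : cincline) (a b c d : L) : (a ⊗ b) ⊗ (c ⊗ d) = (a ⊗ c) ⊗ (b ⊗ d).
Proof. by rewrite -!imulA (imulA b c d) (imulC b c) -(imulA c b d). Qed.

Lemma LI (L : cincline) (x a : L) : normal_incline L -> ile x a -> exists y, x = a ⊗ y.
Proof.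
case=> HLI _ hxa.
have [_ [_ Hdown]] := HLI a.
have Ga : gen_r_ideal a a by move=> J _.
apply: (Hdown x a Ga hxa (fun z => exists y, z = a ⊗ y)); last by exists I1; rewrite mul1r.
split; first by exists a, I1; rewrite mul1r.
split.
  by move=> u v [y1 ->] [y2 ->]; exists (y1 ⊕ y2); rewrite imulDr.
move=> u v [y1 ->]; split; first by exists (y1 ⊗ v); rewrite imulA.
by exists (y1 ⊗ v); rewrite imulC imulA.
Qed.

Lemma sqrt_uniq (L : cincline) (c d : L) : normal_incline L -> c ⊗ c = d ⊗ d -> c = d.
Proof.
case=> _ [H2 _] h.
have [c0 [_ U]] := H2 (d ⊗ d).
by rewrite (U c h) (U d erefl).
Qed.

Lemma sqrt_ex (L : cincline) (x : L) : normal_incline L -> exists c, c ⊗ c = x.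
Proof. case=> _ [H2 _]; have [c [h _]] := H2 x; by exists c. Qed.

Lemma sq_mono (L : cincline) (x y : L) : normal_incline L -> ile (x ⊗ x) (y ⊗ y) -> ile x y.
Proof.
move=> HN h; rewrite /ile; apply: sqrt_uniq => //.
have [_ [_ H3]] := HN.
apply: ile_anti.
  have hxy : ile (x ⊗ y) (y ⊗ y) by apply: ile_trans (H3 x y) _; exact: ile_lub h (ile_refl _).
  rewrite mulDl !imulDr; apply: ile_lub; apply: ile_lub => //.
  - by rewrite imulC.
  - exact: ile_refl.
exact: ile_mul2 (ile_addr x y) (ile_addr x y).
Qed.

Lemma F_sq (L : cincline) (v m : L) : normal_incline L -> (v ⊗ v) ⊗ m = v ⊗ v -> v ⊗ m = v.
Proof.
move=> HN h; apply: sqrt_uniq => //.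
by rewrite mulACA imulA h h.
Qed.

Lemma F_le (L : cincline) (x s m : L) : normal_incline L -> ile x s -> s ⊗ m = s -> x ⊗ m = x.
Proof.
move=> HN hxs hm; have [r ->] := LI HN hxs.
by rewrite -imulA (imulC r m) imulA hm.
Qed.

Lemma cancelK (L : cincline) (u Q : L) : normal_incline L -> ile (u ⊗ u) (u ⊗ Q) -> ile u Q.
Proof.
move=> HN h.
set v := u ⊕ Q.
have hQv : ile Q v by apply: ile_addr.
have hvv : v ⊗ v = Q ⊗ v.
  apply: ile_anti; last by apply: ile_mul2r.
  rewrite /v mulDl; apply: ile_lub; last exact: ile_refl.
  rewrite imulDr; apply: ile_lub.
    apply: ile_trans h _; rewrite imulC imulDr; exact: ile_addl.
  rewrite imulC imulDr; exact: ile_addl.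
have [m hm] := LI HN hQv.
have : (v ⊗ v) ⊗ m = v ⊗ v by rewrite {2}hvv hm -!imulA (imulC m v).
move/(F_sq HN) => hvm.
by rewrite /ile -/v hm hvm.
Qed.

Lemma lemC (L : cincline) (t P Q : L) : normal_incline L -> ile (t ⊗ P) (t ⊗ Q) ->
  exists w, t ⊗ w = t /\ ile (w ⊗ P) Q.
Proof.
move=> HN h.
set X := t ⊕ Q; set S := X ⊕ P.
have hXS : ile X S by apply: ile_addl.
have [w hw] := LI HN hXS.
exists w; split.
  have htS : t ⊗ S = t ⊗ X.
    rewrite /S imulDr; apply: ile_anti; last exact: ile_addl.
    apply: ile_lub; first exact: ile_refl.
    apply: ile_trans h _; apply: ile_mul2l; exact: ile_addr.
  have htX : (t ⊗ X) ⊗ w = t ⊗ X by rewrite -htS -imulA -hw.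
  have htt : ile (t ⊗ t) (t ⊗ X) by apply: ile_mul2l; exact: ile_addl.
  apply: (F_sq HN); exact: F_le HN htt htX.
set a := w ⊗ P.
have haX : ile a X by rewrite hw /a imulC; apply: ile_mul2r; exact: ile_addr.
have haP : ile a P by apply: ile_mulr.
have [r hr] := LI HN haX.
set u := t ⊗ r.
have hua : ile u a by rewrite hr /u imulC (imulC X); apply: ile_mul2l; exact: ile_addl.
have hu : ile u Q.
  apply: (cancelK HN); apply: ile_trans (ile_mul2l u (ile_trans hua haP)) _.
  rewrite /u (imulC t r) -imulA -imulA; apply: ile_mul2l; exact: h.
rewrite -/a hr /X mulDl -/u; apply: ile_lub => //; exact: ile_mull.
Qed.

Lemma big_le (L : cincline) (I : Type) (r : seq I) (F : I -> L) (c : L) :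
  (forall i, ile (F i) c) -> ile (\big[@iadd L/I0]_(i <- r) F i) c.
Proof.
move=> h; elim: r => [|a r IH]; first by rewrite big_nil; exact: ile0.
rewrite big_cons; exact: ile_lub.
Qed.

Lemma le_big (L : cincline) (I : eqType) (r : seq I) (F : I -> L) (i : I) :
  i \in r -> ile (F i) (\big[@iadd L/I0]_(j <- r) F j).
Proof.
elim: r => [|a r IH] //; rewrite in_cons big_cons => /orP [/eqP ->|hi].
  exact: ile_addl.
apply: ile_trans (IH hi) _; exact: ile_addr.
Qed.

Lemma big_mul_le (L : cincline) (I : Type) (r : seq I) (F : I -> L) (y c : L) :
  (forall i, ile (F i ⊗ y) c) -> ile ((\big[@iadd L/I0]_(i <- r) F i) ⊗ y) c.
Proof.
move=> h; elim: r => [|a r IH]; first by rewrite big_nil mul0; exact: ile0.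
rewrite big_cons mulDl; exact: ile_lub.
Qed.

Lemma prod_fix (L : cincline) (I : Type) (r : seq I) (F : I -> L) (t : L) :
  (forall i, t ⊗ F i = t) -> t ⊗ (\big[@imul L/I1]_(i <- r) F i) = t.
Proof.
move=> h; elim: r => [|a r IH]; first by rewrite big_nil mul1r.
by rewrite big_cons imulA h IH.
Qed.

Lemma prod_le (L : cincline) (I : eqType) (r : seq I) (F : I -> L) (i : I) :
  i \in r -> ile (\big[@imul L/I1]_(j <- r) F j) (F i).
Proof.
elim: r => [|a r IH] //; rewrite in_cons big_cons => /orP [/eqP ->|hi].
  exact: ile_mull.
apply: ile_trans (IH hi); exact: ile_mulr.
Qed.

Lemma column (L : cincline) (n : nat) (s : L) (x : 'I_n -> L) (a : 'I_n -> 'I_n -> L)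
  (Pr : pred 'I_n) : normal_incline L -> (forall i, ile (x i) s) ->
  (forall i j, Pr i -> Pr j -> ile (x i ⊗ x j) ((s ⊗ s) ⊗ a i j)) ->
  exists y : 'I_n -> L, (forall i, s ⊗ y i = x i) /\
    (forall i j, Pr i -> Pr j -> ile (y i ⊗ y j) (a i j)).
Proof.
move=> HN hxs hx.
have [z hz] := functional_choice (fun i (z : L) => x i = s ⊗ z) (fun i => LI HN (hxs i)).
have hw : forall p : 'I_n * 'I_n, exists w : L, (s ⊗ s) ⊗ w = s ⊗ s /\
    (Pr p.1 -> Pr p.2 -> ile (w ⊗ (z p.1 ⊗ z p.2)) (a p.1 p.2)).
  move=> [i j] /=; case: (boolP (Pr i && Pr j)) => [/andP [hi hj]|hn].
    have : ile ((s ⊗ s) ⊗ (z i ⊗ z j)) ((s ⊗ s) ⊗ a i j).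
      by rewrite mulACA -hz -hz; apply: hx.
    move/(lemC HN) => [w [h1 h2]]; exists w; split => // _ _.
  exists I1; split; first exact: mul1r.
  by move=> hi hj; move: hn; rewrite hi hj.
have [w hwf] := functional_choice _ hw.
set W := \big[@imul L/I1]_(p : 'I_n * 'I_n) w p.
have hssW : (s ⊗ s) ⊗ W = s ⊗ s by apply: prod_fix => p; case: (hwf p).
have hsW : s ⊗ W = s by apply: (F_sq HN).
exists (fun i => z i ⊗ W); split.
  move=> i; rewrite imulA -hz; exact: F_le HN (hxs i) hsW.
move=> i j hi hj.
rewrite mulACA; apply: ile_trans (ile_mul2l _ (ile_mull W W)) _.
have hWw : ile W (w (i, j)) by apply: prod_le; rewrite mem_index_enum.
apply: ile_trans (ile_mul2l _ hWw) _.
rewrite imulC; have [_ h2] := hwf (i, j); exact: h2.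
Qed.

Lemma big_mul_le2 (L : cincline) (I J : Type) (r : seq I) (r' : seq J) (F : I -> L) (G : J -> L) (c : L) :
  (forall i j, ile (F i ⊗ G j) c) ->
  ile ((\big[@iadd L/I0]_(i <- r) F i) ⊗ (\big[@iadd L/I0]_(j <- r') G j)) c.
Proof.
move=> h; apply: big_mul_le => i; rewrite imulC; apply: big_mul_le => j.
rewrite imulC; exact: h.
Qed.

Theorem mainTheorem7 (L : cincline) (n : nat) (A : 'M[L]_n) :
  normal_incline L -> (3 <= n)%N -> completely_positive A ->
  lap2_pos_ge_neg A -> UL_completely_positive A.
Proof.
move=> HN _ [k [B [_ HA]]] Hlap.
have hA : forall i j, A i j = \big[@iadd L/I0]_(l < k) (B i l ⊗ B j l).
  by move=> i j; rewrite HA /imx_mul mxE; apply: eq_bigr => l _; rewrite mxE.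
have hsym : forall i j, A i j = A j i.
  by move=> i j; rewrite !hA; apply: eq_bigr => l _; apply: imulC.
have hdiag : forall i l, ile (B i l ⊗ B i l) (A i i).
  move=> i l; rewrite hA; apply: (@le_big L _ _ (fun l => B i l ⊗ B i l)).
  exact: mem_index_enum.
have hcs : forall i j, ile (A i j ⊗ A i j) (A i i ⊗ A j j).
  move=> i j; rewrite {1 2}(hA i j); apply: big_mul_le2 => l m.
  rewrite (imulC (B i m)) mulACA.
  have [_ [_ H3]] := HN.
  apply: ile_trans (H3 _ _) _; apply: ile_lub.
    rewrite mulACA; apply: ile_mul2; exact: hdiag.
  rewrite mulACA imulC; apply: ile_mul2; exact: hdiag.
have [s hs] := functional_choice (fun i (c : L) => c ⊗ c = A i i) (fun i => sqrt_ex (A i i) HN).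
have hle : forall i l, ile (A i l) (s l).
  move=> i l; apply: (sq_mono HN); rewrite hs.
  apply: ile_trans (hcs i l) _; exact: ile_mulr.
have hcol : forall l : 'I_n, exists y : 'I_n -> L, (forall i, s l ⊗ y i = A i l) /\
    (forall i j : 'I_n, (i < l)%N -> (j < l)%N -> ile (y i ⊗ y j) (A i j)).
  move=> l.
  apply: (column (x := fun i => A i l) (a := fun i j => A i j) (Pr := fun i => (i < l)%N) HN).
    by move=> i; apply: hle.
  move=> i j /= hi hj; rewrite hs.
  case: (eqVneq i j) => [<-|hij].
    rewrite (imulC (A l l)); exact: hcs.
  have := Hlap i j l hi hj hij; rewrite (hsym l j) (imulC (A l l)); exact.
have [y hy] := functional_choice _ hcol.
pose u (i l : 'I_n) : L := if (i < l)%N then y l i else if i == l then s l else I0.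
have hU1 : forall i l : 'I_n, (i <= l)%N -> s l ⊗ u i l = A i l.
  move=> i l; rewrite leq_eqVlt /u => /orP [/eqP/val_inj ->|->].
    by rewrite ltnn eqxx hs.
  by case: (hy l).
have hU2 : forall i j l : 'I_n, (i <= l)%N -> (j <= l)%N -> ile (u i l ⊗ u j l) (A i j).
  move=> i j l; rewrite /u leq_eqVlt => /orP [/eqP/val_inj ->|hi];
    rewrite leq_eqVlt => /orP [/eqP/val_inj ->|hj].
  - by rewrite ltnn eqxx hs; exact: ile_refl.
  - rewrite ltnn eqxx hj; have [h1 _] := hy l; rewrite h1 (hsym j l); exact: ile_refl.
  - rewrite ltnn eqxx hi imulC; have [h1 _] := hy l; rewrite h1; exact: ile_refl.
  - rewrite hi hj; have [_ h2] := hy l; exact: h2.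
have hU0 : forall i l : 'I_n, (l < i)%N -> u i l = I0.
  move=> i l hli; rewrite /u ltnNge (ltnW hli) /=.
  by case: eqP => // hil; move: hli; rewrite hil ltnn.
have hUd : forall l : 'I_n, u l l = s l by move=> l; rewrite /u ltnn eqxx.
exists (\matrix_(i, l) u i l)%R; split.
  by move=> i j hji; rewrite mxE; apply: hU0.
apply/matrixP => i j; rewrite /imx_mul mxE.
under eq_bigr => l _ do rewrite !mxE.
apply: ile_anti.
  case: (leqP i j) => hij.
    have := @le_big L _ _ (fun l => u i l ⊗ u j l) j (mem_index_enum j).
    by rewrite imulC hUd hU1.
  have := @le_big L _ _ (fun l => u i l ⊗ u j l) i (mem_index_enum i).
  by rewrite hUd hU1 ?(ltnW hij) // hsym.
apply: big_le => l.
case: (leqP i l) => hi; last by rewrite hU0 // mul0; exact: ile0.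
case: (leqP j l) => hj; last by rewrite (hU0 j) // mulr0; exact: ile0.
exact: hU2.
Qed.
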